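(* Let $\mathbf{R}^{\mathrm{o}}$ be a finite set of obligations, $\mathbf{R}=(\emptyset,\mathbf{R}^{\mathrm{o}})$, fix a set $\Gamma$ of alethic formulas relative to which the overriding relation $\triangleright$ is computed, and let $M$ be a replete $\mathbf{R}$-ordered model. For every Boolean formula $a$ and world $w$ of $M$: if $w\in\max_{\succeq_I}(\Vert a\Vert)$, then $w\models a$ and $w\models\bigvee_{H\in\mathit{maxf}(\mathbf{R}^{\mathrm{o}}_{\triangleright},a,\{a\})}\bigl(\bigwedge\mathrm{m}(H)\bigr)$, with $out_4^{+}$ as the underlying I/O operation.
   Context: Boolean formulas over propositional letters; $\models_{\mathrm{PL}}$ classical entailment, $\models_{\mathrm{S5}}$ S5 entailment. An obligation is $\bigcirc(B/A)$ ($A,B$ Boolean) with body $b=A$, head $h=B$. Overriding: $r_j\triangleright r_i$ iff (i) $\{h(r_i),h(r_j)\}\cup\Gamma\models_{\mathrm{S5}}\bot$; (ii) $b(r_j)\models_{\mathrm{PL}}b(r_i)$ and $b(r_i)\not\models_{\mathrm{PL}}b(r_j)$; (iii) $\{h(r_i),b(r_j)\}\not\models_{\mathrm{PL}}\bot$. An $\mathbf{R}$-ordered model (no normality conditionals) is $(W,\succeq_N,\succeq_I,v)$ with $W\neq\emptyset$, valuation $v$, $\succeq_N=W\times W$, and $w_1\succeq_I w_2$ iff $V(w_1)\subseteq V(w_2)$, where $V(w)=\{r_i\in\mathbf{R}^{\mathrm{o}}:w\models b(r_i)\wedge\neg h(r_i)$ and $w\not\models b(r_j)$ for all $r_j\in\mathbf{R}^{\mathrm{o}}$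 with $r_j\triangleright r_i\}$. $\max_{\succeq_I}(X)=\{w\in X:\forall u\in X(u\succeq_I w\Rightarrow w\succeq_I u)\}$, $\Vert a\Vert$ the set of worlds where $a$ holds. Replete: every PL-consistent Boolean formula holds at some world. I/O: for a set $H$ of pairs of Boolean formulas, $\mathrm{m}(H)=\{a\rightarrow x:(a,x)\in H\}$ ($\bigwedge\mathrm{m}(\emptyset)=\top$), $out_4^{+}(H,a)=\{x:\{a\}\cup\mathrm{m}(H)\models_{\mathrm{PL}}x\}$; $\mathit{maxf}(N,a,C)$ is the set of $\subseteq$-maximal $H\subseteq N$ with $out_4^{+}(H,a)\cup C$ PL-consistent. Translation: for $r_i=\bigcirc(x/a)$, $D(r_i)=\{r_j\in\mathbf{R}^{\mathrm{o}}:r_j\triangleright r_i\}$, $r_i^{\triangleright}=(a\wedge\bigwedge_{r_j\in D(r_i)}\neg b(r_j),x)$ if $D(r_i)\neq\emptyset$, else $(a,x)$; $\mathbf{R}^{\mathrm{o}}_{\triangleright}=\{r^{\triangleright}:r\in\mathbf{R}^{\mathrm{o}}\}$. *)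

(* Defs.v *)
From Stdlib Require Import List ClassicalEpsilon.
Import ListNotations.
Set Implicit Arguments.

Inductive bform (P : Type) : Type :=
| BAtom : P -> bform P
| BTop : bform P
| BBot : bform P
| BNeg : bform P -> bform P
| BAnd : bform P -> bform P -> bform P
| BOr  : bform P -> bform P -> bform P
| BImp : bform P -> bform P -> bform P.
Arguments BTop {P}. Arguments BBot {P}.

Fixpoint beval (P : Type) (v : P -> bool) (f : bform P) : bool :=
  match f with
  | BAtom p => v p
  | BTop => true
  | BBot => false
  | BNeg g => negb (beval v g)
  | BAnd g h => andb (beval v g) (beval v h)
  | BOr g h => orb (beval v g) (beval v h)
  | BImp g h => orb (negb (beval v g)) (beval v h)
  end.

Definition pl_entails (P : Type) (S : bform P -> Prop) (x : bform P) : Prop :=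
  forall v : P -> bool, (forall f, S f -> beval v f = true) -> beval v x = true.

Definition pl_consistent (P : Type) (S : bform P -> Prop) : Prop :=
  exists v : P -> bool, forall f, S f -> beval v f = true.

Inductive mform (P : Type) : Type :=
| MAtom : P -> mform P
| MTop : mform P
| MBot : mform P
| MNeg : mform P -> mform P
| MAnd : mform P -> mform P -> mform P
| MOr  : mform P -> mform P -> mform P
| MImp : mform P -> mform P -> mform P
| MBox : mform P -> mform P.
Arguments MTop {P}. Arguments MBot {P}.

Fixpoint embed (P : Type) (f : bform P) : mform P :=
  match f with
  | BAtom p => MAtom p
  | BTop => MTop
  | BBot => MBot
  | BNeg g => MNeg (embed g)
  | BAnd g h => MAnd (embed g) (embed h)
  | BOr g h => MOr (embed g) (embed h)
  | BImp g h => MImp (embed g) (embed h)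
  end.

Fixpoint msat (P W : Type) (R : W -> W -> Prop) (V : W -> P -> bool)
    (w : W) (f : mform P) : Prop :=
  match f with
  | MAtom p => V w p = true
  | MTop => True
  | MBot => False
  | MNeg g => ~ msat R V w g
  | MAnd g h => msat R V w g /\ msat R V w h
  | MOr g h => msat R V w g \/ msat R V w h
  | MImp g h => msat R V w g -> msat R V w h
  | MBox g => forall u, R w u -> msat R V u g
  end.

Definition equivalence_rel (W : Type) (R : W -> W -> Prop) : Prop :=
  (forall x, R x x) /\ (forall x y, R x y -> R y x) /\
  (forall x y z, R x y -> R y z -> R x z).

Definition s5_entails (P : Type) (S : mform P -> Prop) (x : mform P) : Prop :=
  forall (W : Type) (R : W -> W -> Prop) (V : W -> P -> bool) (w : W),
    equivalence_rel R ->
    (forall f, S f -> msat R V w f) -> msat R V w x.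

Record obligation (P : Type) := Oblig { body : bform P; head : bform P }.

Definition overrides (P : Type) (Gamma : mform P -> Prop)
    (rj ri : obligation P) : Prop :=
  s5_entails (fun f => f = embed (head ri) \/ f = embed (head rj) \/ Gamma f) MBot
  /\ pl_entails (fun f => f = body rj) (body ri)
  /\ ~ pl_entails (fun f => f = body ri) (body rj)
  /\ ~ pl_entails (fun f => f = head ri \/ f = body rj) BBot.

Definition bsat (P W : Type) (val : W -> P -> bool) (w : W) (f : bform P) : Prop :=
  beval (val w) f = true.

Definition Vset (P W : Type) (Gamma : mform P -> Prop) (Ro : list (obligation P))
    (val : W -> P -> bool) (w : W) (r : obligation P) : Prop :=
  In r Ro /\ bsat val w (body r) /\ ~ bsat val w (head r) /\
  (forall rj, In rj Ro -> overrides Gamma rj r -> ~ bsat val w (body rj)).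

Record model (P : Type) := Model {
  world : Type;
  geN : world -> world -> Prop;
  geI : world -> world -> Prop;
  val : world -> P -> bool }.

Definition R_ordered (P : Type) (Gamma : mform P -> Prop) (Ro : list (obligation P))
    (M : model P) : Prop :=
  inhabited (world M) /\
  (forall w1 w2, geN M w1 w2) /\
  (forall w1 w2, geI M w1 w2 <->
     (forall r, Vset Gamma Ro (val M) w1 r -> Vset Gamma Ro (val M) w2 r)).

Definition replete (P : Type) (M : model P) : Prop :=
  forall f : bform P, pl_consistent (fun g => g = f) -> exists w, bsat (val M) w f.

Definition norm (P : Type) (M : model P) (a : bform P) : world M -> Prop :=
  fun w => bsat (val M) w a.

Definition max_geI (P : Type) (M : model P) (X : world M -> Prop) : world M -> Prop :=
  fun w => X w /\ forall u, X u -> geI M u w -> geI M w u.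

Definition m_of (P : Type) (H : (bform P * bform P) -> Prop) : bform P -> Prop :=
  fun f => exists p, H p /\ f = BImp (fst p) (snd p).

Definition out4p (P : Type) (H : (bform P * bform P) -> Prop) (a : bform P)
    : bform P -> Prop :=
  fun x => pl_entails (fun f => f = a \/ m_of H f) x.

Definition maxf (P : Type) (N : (bform P * bform P) -> Prop) (a : bform P)
    (C : bform P -> Prop) : ((bform P * bform P) -> Prop) -> Prop :=
  fun H =>
    (forall p, H p -> N p) /\
    pl_consistent (fun f => out4p H a f \/ C f) /\
    (forall H', (forall p, H p -> H' p) -> (forall p, H' p -> N p) ->
       pl_consistent (fun f => out4p H' a f \/ C f) ->
       forall p, H' p -> H p).

Definition overridesb (P : Type) (Gamma : mform P -> Prop) (rj ri : obligation P) : bool :=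
  if excluded_middle_informative (overrides Gamma rj ri) then true else false.

Definition Dset (P : Type) (Gamma : mform P -> Prop) (Ro : list (obligation P))
    (ri : obligation P) : list (obligation P) :=
  filter (fun rj => overridesb Gamma rj ri) Ro.

Definition bigAnd (P : Type) (l : list (bform P)) : bform P :=
  fold_right (@BAnd P) BTop l.

Definition translate (P : Type) (Gamma : mform P -> Prop) (Ro : list (obligation P))
    (ri : obligation P) : bform P * bform P :=
  match Dset Gamma Ro ri with
  | [] => (body ri, head ri)
  | D => (BAnd (body ri) (bigAnd (map (fun rj => BNeg (body rj)) D)), head ri)
  end.

Definition Ro_tr (P : Type) (Gamma : mform P -> Prop) (Ro : list (obligation P))
    : (bform P * bform P) -> Prop :=
  fun p => exists r, In r Ro /\ p = translate Gamma Ro r.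

(* Main.v *)
Require Import Defs.
From Stdlib Require Import List Classical Bool ClassicalEpsilon.
Import ListNotations.

Lemma beval_bigAnd (P : Type) (v : P -> bool) (l : list (bform P)) :
  beval v (bigAnd l) = true <-> forall f, In f l -> beval v f = true.
Proof.
  induction l as [|x l IH]; simpl.
  - split; [intros _ f []|auto].
  - rewrite andb_true_iff, IH. split.
    + intros [H1 H2] f [<-|Hf]; auto.
    + intros H; split; auto.
Qed.

Lemma Dset_in (P : Type) (Gamma : mform P -> Prop) Ro r rj :
  In rj (Dset Gamma Ro r) <-> In rj Ro /\ overrides Gamma rj r.
Proof.
  unfold Dset; rewrite filter_In; unfold overridesb.
  destruct excluded_middle_informative; intuition congruence.
Qed.

Lemma snd_tr (P : Type) (Gamma : mform P -> Prop) Ro r :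
  snd (translate Gamma Ro r) = Defs.head r.
Proof. unfold translate; destruct (Dset Gamma Ro r); reflexivity. Qed.

Lemma fst_tr (P : Type) (Gamma : mform P -> Prop) Ro r (v : P -> bool) :
  beval v (fst (translate Gamma Ro r)) = true <->
  beval v (body r) = true /\
  (forall rj, In rj Ro -> overrides Gamma rj r -> beval v (body rj) = false).
Proof.
  unfold translate.
  destruct (Dset Gamma Ro r) as [|d ds] eqn:E; cbn [fst].
  - split; [intros H; split; [exact H|]|tauto].
    intros rj Hin Ho. assert (In rj (Dset Gamma Ro r)) by (apply Dset_in; auto).
    rewrite E in H0; destruct H0.
  - cbn [beval]. rewrite andb_true_iff.
    rewrite beval_bigAnd. split.
    + intros [H1 H2]; split; auto. intros rj Hin Ho.
      assert (Hd : In rj (Dset Gamma Ro r)) by (apply Dset_in; auto).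
      rewrite E in Hd.
      specialize (H2 (BNeg (body rj)) (in_map _ _ _ Hd)). simpl in H2.
      apply negb_true_iff; exact H2.
    + intros [H1 H2]; split; auto. intros f Hf.
      apply in_map_iff in Hf. destruct Hf as [rj [<- Hrj]].
      rewrite <- E in Hrj. apply Dset_in in Hrj. destruct Hrj as [Hi Ho].
      simpl. rewrite (H2 rj Hi Ho). reflexivity.
Qed.

Lemma Vset_tr (P W : Type) (Gamma : mform P -> Prop) Ro (vl : W -> P -> bool) x r :
  In r Ro ->
  (Vset Gamma Ro vl x r <->
   ~ bsat vl x (BImp (fst (translate Gamma Ro r)) (snd (translate Gamma Ro r)))).
Proof.
  intros Hr. unfold Vset, bsat. simpl. rewrite snd_tr.
  pose proof (fst_tr _ Gamma Ro r (vl x)) as F.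
  split.
  - intros [_ [Hb [Hh Ho]]] Hc.
    assert (beval (vl x) (fst (translate Gamma Ro r)) = true).
    { apply F; split; auto. intros rj Hi Ho'. apply not_true_is_false. eauto. }
    rewrite H in Hc; simpl in Hc. contradiction.
  - intros Hn.
    destruct (beval (vl x) (fst (translate Gamma Ro r))) eqn:E1;
      [|simpl in Hn; exfalso; auto].
    destruct (beval (vl x) (Defs.head r)) eqn:E2; [simpl in Hn; exfalso; auto|].
    apply (proj1 (fst_tr _ Gamma Ro r (vl x))) in E1. destruct E1 as [Hb Ho].
    split; [auto|split; [auto|split; [congruence|]]].
    intros rj Hi Ho' Hc. rewrite (Ho rj Hi Ho') in Hc; discriminate.
Qed.

Theorem theorem2 (P : Type) (Gamma : mform P -> Prop) (Ro : list (obligation P))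
    (M : model P) :
  R_ordered Gamma Ro M -> replete M ->
  forall (a : bform P) (w : world M),
    max_geI M (norm M a) w ->
    bsat (val M) w a /\
    exists H, maxf (Ro_tr Gamma Ro) a (fun f => f = a) H /\
              (forall p, H p -> bsat (val M) w (BImp (fst p) (snd p))).
Proof.
  intros [_ [_ HI]] Hrep a w [Hwa Hmax].
  split; [exact Hwa|].
  exists (fun p => Ro_tr Gamma Ro p /\ bsat (val M) w (BImp (fst p) (snd p))).
  split; [|intros p [_ Hp]; exact Hp].
  split; [intros p [Hp _]; exact Hp|].
  split.
  - exists (val M w). intros f [Hf| ->]; [|exact Hwa].
    apply Hf. intros g [->|[p [[_ Hp] ->]]]; [exact Hwa|exact Hp].
  - intros H' Hsub HN [v Hv] p Hp.
    set (L := filter (fun r => if excluded_middle_informative (H' (translate Gamma Ro r))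
                               then true else false) Ro).
    set (F := BAnd a (bigAnd (map (fun r => BImp (fst (translate Gamma Ro r))
                                              (snd (translate Gamma Ro r))) L))).
    assert (HvF : pl_consistent (fun g => g = F)).
    { exists v. intros g ->. unfold F. simpl. apply andb_true_iff. split.
      - apply Hv. right; reflexivity.
      - apply beval_bigAnd. intros f Hf. apply in_map_iff in Hf.
        destruct Hf as [r [<- Hr]]. unfold L in Hr. apply filter_In in Hr.
        destruct Hr as [_ Hr]. destruct excluded_middle_informative as [Hh|]; [|discriminate].
        apply Hv. left. intros v' Hv'. apply Hv'. right.
        exists (translate Gamma Ro r). split; auto. }
    destruct (Hrep F HvF) as [u Hu].
    unfold bsat, F in Hu. simpl in Hu. apply andb_true_iff in Hu.
    destruct Hu as [Hua HuL]. rewrite beval_bigAnd in HuL.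
    assert (Husat : forall r, In r Ro -> H' (translate Gamma Ro r) ->
                bsat (val M) u (BImp (fst (translate Gamma Ro r)) (snd (translate Gamma Ro r)))).
    { intros r Hr Hh. apply HuL. apply in_map_iff. exists r. split; auto.
      unfold L. apply filter_In. split; auto.
      destruct excluded_middle_informative; [reflexivity|contradiction]. }
    assert (Hgeu : geI M u w).
    { apply HI. intros r Hr.
      assert (HrRo : In r Ro) by (destruct Hr; auto).
      apply NNPP. intros Hn.
      rewrite (@Vset_tr _ _ Gamma Ro (val M) _ r HrRo) in Hn. apply NNPP in Hn.
      rewrite (@Vset_tr _ _ Gamma Ro (val M) _ r HrRo) in Hr. apply Hr.
      apply Husat; auto. apply Hsub. split; auto. exists r; auto. }
    assert (Hgew : geI M w u) by (apply Hmax; auto).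
    destruct (HN p Hp) as [r [Hr ->]]. split; [exists r; auto|].
    apply NNPP. intros Hn.
    rewrite <- (@Vset_tr _ _ Gamma Ro (val M) _ r Hr) in Hn.
    apply (proj1 (HI w u)) with (r := r) in Hgew; auto.
    rewrite (@Vset_tr _ _ Gamma Ro (val M) _ r Hr) in Hgew. apply Hgew. apply Husat; auto.
Qed.
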